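(* Consider the combined heat and power network described in the context, operating in Mode 1, after a step change in the electrical load $p^L$. At an equilibrium, the generation deviations $p^G$, the heat pump powers $p^P=(p^P_j)_{j\in H_e}$ and $p^U=(D_j\omega_j)_{j\in N_e}$ form a solution of $$\min_{p^G,p^P,p^U}\ \tfrac12(p^G)^TQ_ep^G+\tfrac12(p^P)^TQ_pp^P+\tfrac12(p^U)^TQ_up^U\quad\text{s.t.}\quad \mathbf 1^Tp^G=\mathbf 1^Tp^L+\mathbf 1^Tp^P+\mathbf 1^Tp^U,$$ where $Q_e=\mathrm{diag}(Q_{e,jj})_{j\in N_e^G}$, $Q_p=\mathrm{diag}(1/a_{1,j})_{j\in H_e}$, $Q_u=\mathrm{diag}(1/D_j)_{j\in N_e}$. Moreover, given the heat pump power consumption $\bar p^P$ in this solution (so that $h^P_{j_k}=C_o\bar p^P_{i_k}$, $k\in H$), the equilibrium deviations $h^G=(h^G_j)_{j\in E_h^G}$ of the conventional heat sources form the solution of $$\min_{h^G}\ \tfrac12(h^G)^TQ_hh^G\quad\text{s.t.}\quad \mathbf 1^Th^G=\mathbf 1^T(h^L-h^P),$$ where $Q_h=\mathrm{diag}(Q_{h,jj})_{j\in E_h^G}$.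
   Context: Power network: a directed graph $(N_e,E_e)$ with buses $N_e$ and lines $E_e$, arbitrarily oriented. $N_e^G\subseteq N_e$ is the set of generator buses and $H_e\subseteq N_e$ the set of buses to which heat pumps are connected. Heat network: a directed graph $(N_h,E_h)$, each edge $j$ oriented along its mass flow with inlet node $s(j)$ and outlet node $t(j)$; among the edges are heat-pump edges $H_h$, conventional heat source edges $E_h^G$ and heat-load edges $E_h^L$. Heat pumps are indexed by a finite set $H$; heat pump $k\in H$ is connected to bus $i_k\in H_e$ and corresponds to edge $j_k\in H_h$. Lines: for $(i,j)\in E_e$, $\dot\eta_{ij}=\omega_i-\omega_j$, $p_{ij}=B_{ij}\sin(\eta_{ij})-p^{\mathrm{nom}}_{ij}$, $B_{ij}>0$. Every bus $j\in N_e$: $M_j\dot\omega_j=-p^L_j-p^P_j+p^G_j-p^U_j+\sum_{i:(i,j)\in E_e}p_{ij}-\sum_{k:(j,k)\in E_e}p_{jk}$, with $M_j>0$, $p^U_j=D_j\omega_j$, $D_j>0$, $p^L_j$ constant, $p^G_j=0$ for $j\notin N_e^G$, $p^P_j=0$ for $j\notin H_e$. Heat network ($\rho C_p=1$), constant positive mass flows $q^E_j$, volumes $V^E_j,V^N_k>0$: $V^E_j\dot T^E_j=q^E_j(T^N_{s(j)}-T^E_j)+h^G_j+h^P_j-h^L_j$ for each edge $j$, $V^N_k\dot T^N_k=\sum_{j:t(j)=k}q^E_j(T^E_j-T^N_k)$ for each node $k$, where $h^G_j=0$ unless $j\in E_h^G$, $h^P_j=0$ unless $j\in H_h$, $h^L_j=0$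 unless $j\in E_h^L$, $h^L_j$ constant. In matrix form $V\dot T=-A_hT+\mathrm{col}(h^G+h^P-h^L,\mathbf 0)$ with $T=\mathrm{col}(T^E,T^N)$, $V=\mathrm{diag}(V^E,V^N)$, where $A_h\mathbf 1=0$, $\mathbf 1^TA_h=0$ and $A_h+A_h^T$ is positive semidefinite with a simple zero eigenvalue. Average temperature $\bar T=\mathbf 1^TVT/(\mathbf 1^TV\mathbf 1)$. Generation control: $\dot p^G_j=-p^G_j-\frac{1}{Q_{e,jj}}\omega_j$ ($j\in N_e^G$), $\dot h^G_j=-h^G_j-\frac{1}{Q_{h,jj}}\bar T$ ($j\in E_h^G$), with $Q_{e,jj},Q_{h,jj}>0$. Heat pump: $h^P_{j_k}=C_op^P_{i_k}$, $k\in H$, constant $C_o$. Mode 1: $p^P_j=a_{1,j}\omega_j$ for $j\in H_e$, constants $a_{1,j}>0$. *)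

(* Defs.v *)
From HB Require Import structures.
From mathcomp Require Import all_boot all_order all_algebra.
From mathcomp Require Import reals trigo.
Set Implicit Arguments. Unset Strict Implicit. Unset Printing Implicit Defensive.
Import Order.TTheory GRing.Theory Num.Theory.
Local Open Scope ring_scope.

Section CHP.
Variable R : realType.

Variable Ne : finType.
Variable Ee : {set Ne * Ne}.                (* lines (i,j), arbitrary orientation *)

Definition line_flow (B pnom eta : Ne * Ne -> R) (e : Ne * Ne) : R :=
  B e * sin (eta e) - pnom e.

(* Right-hand side of  M_j dω_j/dt = ... , with p^U_j = D_j ω_j *)
Definition bus_rhs (B pnom eta : Ne * Ne -> R) (D pL pP pG omega : Ne -> R)
  (j : Ne) : R :=
  - pL j - pP j + pG j - D j * omega j
  + \sum_(e in Ee | e.2 == j) line_flow B pnom eta e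
  - \sum_(e in Ee | e.1 == j) line_flow B pnom eta e.

Definition elec_adj : rel Ne := fun a b => ((a, b) \in Ee) || ((b, a) \in Ee).

Variables (Eh Nh : finType) (s t : Eh -> Nh).

(* the two blocks of A_h T, T = col(T^E, T^N):
   V dT/dt = - A_h T + col(h^G + h^P - h^L, 0) *)
Definition Ah_E (q : Eh -> R) (TE : Eh -> R) (TN : Nh -> R) (j : Eh) : R :=
  q j * (TE j - TN (s j)).
Definition Ah_N (q : Eh -> R) (TE : Eh -> R) (TN : Nh -> R) (k : Nh) : R :=
  \sum_(j | t j == k) q j * (TN k - TE j).

Definition Ah_left_kernel_one (q : Eh -> R) : Prop :=
  forall (TE : Eh -> R) (TN : Nh -> R),
    \sum_j Ah_E q TE TN j + \sum_k Ah_N q TE TN k = 0.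

Definition Tbar (VE : Eh -> R) (VN : Nh -> R) (TE : Eh -> R) (TN : Nh -> R) : R :=
  (\sum_j VE j * TE j + \sum_k VN k * TN k) / (\sum_j VE j + \sum_k VN k).

Definition elec_cost (NeG He : {set Ne}) (QeD a1 D : Ne -> R)
  (xG xP xU : Ne -> R) : R :=
  2^-1 * (\sum_(j in NeG) QeD j * xG j ^+ 2)
  + 2^-1 * (\sum_(j in He) (a1 j)^-1 * xP j ^+ 2)
  + 2^-1 * (\sum_j (D j)^-1 * xU j ^+ 2).

Definition elec_feasible (NeG He : {set Ne}) (pL : Ne -> R)
  (xG xP xU : Ne -> R) : Prop :=
  \sum_(j in NeG) xG j = \sum_j pL j + \sum_(j in He) xP j + \sum_j xU j.

Definition elec_opt (NeG He : {set Ne}) (QeD a1 D pL : Ne -> R)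
  (xG xP xU : Ne -> R) : Prop :=
  elec_feasible NeG He pL xG xP xU /\
  forall yG yP yU : Ne -> R, elec_feasible NeG He pL yG yP yU ->
    elec_cost NeG He QeD a1 D xG xP xU <= elec_cost NeG He QeD a1 D yG yP yU.

Definition heat_cost (EhG : {set Eh}) (QhD : Eh -> R) (x : Eh -> R) : R :=
  2^-1 * (\sum_(j in EhG) QhD j * x j ^+ 2).

Definition heat_feasible (EhG : {set Eh}) (hL hP : Eh -> R) (x : Eh -> R) : Prop :=
  \sum_(j in EhG) x j = \sum_j (hL j - hP j).

Definition heat_opt (EhG : {set Eh}) (QhD hL hP : Eh -> R) (x : Eh -> R) : Prop :=
  heat_feasible EhG hL hP x /\
  forall y : Eh -> R, heat_feasible EhG hL hP y ->
    heat_cost EhG QhD x <= heat_cost EhG QhD y.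

End CHP.

(* Main.v *)
Require Import Defs.
From HB Require Import structures.
From mathcomp Require Import all_boot all_order all_algebra.
From mathcomp Require Import reals trigo.
From mathcomp Require Import ring lra.
Import Order.TTheory GRing.Theory Num.Theory.
Local Open Scope ring_scope.

Lemma key (R : realType) (T : finType) (A : {set T}) (c x y : T -> R) (g : R) :
  (forall j, j \in A -> 0 <= c j) -> (forall j, j \in A -> c j * x j = g) ->
  2^-1 * (\sum_(j in A) c j * x j ^+ 2) + g * (\sum_(j in A) y j - \sum_(j in A) x j)
  <= 2^-1 * (\sum_(j in A) c j * y j ^+ 2).
Proof.
move=> Hc Hcx.
rewrite -sumrB !mulr_sumr -big_split /=; apply: ler_sum => j jA.
rewrite -(Hcx j jA).
have := Hc j jA => c0.
have : 0 <= c j * (y j - x j) ^+ 2 by apply: mulr_ge0 => //; apply: sqr_ge0.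
rewrite !expr2 => h; nra.
Qed.

Lemma num0 (R : realType) (a b : R) : 0 < b -> a / b = 0 -> a = 0.
Proof.
by move=> Hb /eqP; rewrite mulf_eq0 invr_eq0 (gt_eqF Hb) orbF => /eqP.
Qed.

Lemma sum_in (R : realType) (T : finType) (A : {set T}) (f : T -> R) :
  (forall j, j \notin A -> f j = 0) -> \sum_(j in A) f j = \sum_j f j.
Proof.
move=> h; rewrite [RHS](bigID (fun j => j \in A)) /= [X in _ = _ + X]big1 ?addr0 //.
Qed.

Arguments sum_in {R T A f}.
Arguments num0 {R a b}.

Lemma sum_setT (R : realType) (T : finType) (f : T -> R) :
  \sum_(j in [set: T]) f j = \sum_j f j.
Proof. by apply: eq_bigl => j; rewrite inE. Qed.

Theorem proposition1
  (R : realType)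
  (* power network *)
  (Ne : finType) (Ee : {set Ne * Ne}) (NeG He : {set Ne})
  (B pnom : Ne * Ne -> R) (M D QeD a1 pL : Ne -> R)
  (* heat network *)
  (Eh Nh : finType) (s t : Eh -> Nh) (EhG EhL : {set Eh})
  (q VE QhD hL : Eh -> R) (VN : Nh -> R)
  (* heat pumps *)
  (H : finType) (i_ : H -> Ne) (j_ : H -> Eh) (Co : R)
  (* an equilibrium state (with the algebraic variables p^P, h^P) *)
  (eta : Ne * Ne -> R) (omega pG pP : Ne -> R)
  (TE hG hP : Eh -> R) (TN : Nh -> R) :
  (* standing assumptions *)
  (forall e, e \in Ee -> 0 < B e) ->
  (forall j, 0 < M j) -> (forall j, 0 < D j) ->
  (forall j, j \in NeG -> 0 < QeD j) ->
  (forall j, j \in He -> 0 < a1 j) ->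
  (forall j, 0 < q j) -> (forall j, 0 < VE j) -> (forall k, 0 < VN k) ->
  (forall j, j \in EhG -> 0 < QhD j) ->
  He = [set i_ k | k in [set: H]] ->
  (forall j, j \notin EhL -> hL j = 0) ->
  Ah_left_kernel_one s t q ->
  (forall a b : Ne, connect (elec_adj Ee) a b) ->
  (* algebraic relations: generation support, Mode 1 heat pumps *)
  (forall j, j \notin NeG -> pG j = 0) ->
  (forall j, j \notin EhG -> hG j = 0) ->
  (forall j, j \in He -> pP j = a1 j * omega j) ->
  (forall j, j \notin He -> pP j = 0) ->
  (forall k, hP (j_ k) = Co * pP (i_ k)) ->
  (forall j, j \notin [set j_ k | k in [set: H]] -> hP j = 0) ->
  (* equilibrium: all time derivatives vanish *)
  (forall e, e \in Ee -> omega e.1 - omega e.2 = 0) ->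
  (forall j, bus_rhs Ee B pnom eta D pL pP pG omega j / M j = 0) ->
  (forall j, j \in NeG -> - pG j - (QeD j)^-1 * omega j = 0) ->
  (forall j, (- Ah_E s q TE TN j + (hG j + hP j - hL j)) / VE j = 0) ->
  (forall k, (- Ah_N t q TE TN k) / VN k = 0) ->
  (forall j, j \in EhG -> - hG j - (QhD j)^-1 * Tbar VE VN TE TN = 0) ->
  (* conclusions *)
  elec_opt NeG He QeD a1 D pL pG pP (fun j => D j * omega j) /\
  heat_opt EhG QhD hL hP hG.
Proof.
move=> HB HM HD HQe Ha1 Hq HVE HVN HQh HHe HhL Hker Hconn HpG HhG HpP1 HpP0
  HhP1 HhP0 Hedge Hbus HgenE HEh HNh HgenH.
split.
-
  have Hadj : forall a b, elec_adj Ee a b -> omega a = omega b.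
    move=> a b; rewrite /elec_adj => /orP [h|h].
      by apply/eqP; rewrite -subr_eq0; apply/eqP; exact: (Hedge (a, b) h).
    by apply/eqP; rewrite eq_sym -subr_eq0; apply/eqP; exact: (Hedge (b, a) h).
  have Hcst : forall a b, omega a = omega b.
    move=> a b; move/connectP: (Hconn a b) => [p pth ->].
    elim: p a pth => //= c p IH a /andP [hac hp].
    by rewrite (Hadj _ _ hac) (IH c hp).
  have [w Hw] : exists w, forall j, omega j = w.
    case: (pickP (@predT Ne)) => [j0 _|e]; first by exists (omega j0).
    by exists 0 => j; have := e j.
  have feas : elec_feasible NeG He pL pG pP (fun j => D j * omega j).
    rewrite /elec_feasible.
    have Hb0 : forall j, bus_rhs Ee B pnom eta D pL pP pG omega j = 0.
      by move=> j; apply: num0 (HM j) (Hbus j).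
    have Hs : \sum_j bus_rhs Ee B pnom eta D pL pP pG omega j = 0.
      by rewrite big1.
    rewrite /bus_rhs !big_split /= in Hs.
    set f := line_flow B pnom eta in Hs.
    have P2 : \sum_j \sum_(e in Ee | e.2 == j) f e = \sum_(e in Ee) f e.
      by rewrite [RHS](partition_big (fun e : Ne * Ne => e.2) predT).
    have P1 : \sum_j \sum_(e in Ee | e.1 == j) f e = \sum_(e in Ee) f e.
      by rewrite [RHS](partition_big (fun e : Ne * Ne => e.1) predT).
    rewrite !sumrN P1 P2 in Hs.
    rewrite (sum_in HpG) (sum_in HpP0).
    lra.
  split => // yG yP yU feasy.
  rewrite /elec_cost.
  have k1 := @key R Ne NeG QeD pG yG (- w)
    (fun j jA => ltW (HQe j jA)).
  have k2 := @key R Ne He (fun j => (a1 j)^-1) pP yP w.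
  have k3 := @key R Ne [set: Ne] (fun j => (D j)^-1) (fun j => D j * omega j) yU w.
  rewrite !sum_setT in k3.
  have e1 : forall j, j \in NeG -> QeD j * pG j = - w.
    move=> j jA; have := HgenE j jA; rewrite Hw => h.
    have -> : pG j = - ((QeD j)^-1 * w) by lra.
    by rewrite mulrN mulrA divff ?mul1r // gt_eqF ?HQe.
  have e2 : forall j, j \in He -> (a1 j)^-1 * pP j = w.
    by move=> j jA; rewrite HpP1 // Hw mulrA mulVf ?mul1r // gt_eqF ?Ha1.
  have e3 : forall j, j \in [set: Ne] -> (D j)^-1 * (D j * omega j) = w.
    by move=> j _; rewrite Hw mulrA mulVf ?mul1r // gt_eqF ?HD.
  have pa1 : forall j, j \in He -> 0 <= (a1 j)^-1.
    by move=> j jA; rewrite invr_ge0 ltW ?Ha1.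
  have pD : forall j, j \in [set: Ne] -> 0 <= (D j)^-1.
    by move=> j _; rewrite invr_ge0 ltW ?HD.
  have := k1 e1.
  have := k2 pa1 e2.
  have := k3 pD e3.
  rewrite /elec_feasible in feas feasy.
  have : w * (\sum_(j in NeG) yG j - \sum_(j in NeG) pG j) =
    w * (\sum_(j in He) yP j - \sum_(j in He) pP j) + w * (\sum_j yU j - \sum_j D j * omega j).
    by rewrite feas feasy; ring.
  lra.
- set Tb := Tbar VE VN TE TN in HgenH.
  have feas : heat_feasible EhG hL hP hG.
    rewrite /heat_feasible (sum_in HhG).
    have := Hker TE TN.
    have -> : \sum_k Ah_N t q TE TN k = 0.
      apply: big1 => k _; have := num0 (HVN k) (HNh k); lra.
    rewrite addr0.
    rewrite (eq_bigr (fun j => hG j + hP j - hL j)); last first.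
      by move=> j _; have := num0 (HVE j) (HEh j); lra.
    rewrite !big_split /= !sumrN => h; lra.
  split => // y feasy.
  rewrite /heat_cost.
  have pQ : forall j, j \in EhG -> 0 <= QhD j by move=> j jA; rewrite ltW ?HQh.
  have e1 : forall j, j \in EhG -> QhD j * hG j = - Tb.
    move=> j jA; have := HgenH j jA => h.
    have -> : hG j = - ((QhD j)^-1 * Tb) by lra.
    by rewrite mulrN mulrA divff ?mul1r // gt_eqF ?HQh.
  have := @key R Eh EhG QhD hG y (- Tb) pQ e1.
  rewrite /heat_feasible in feas feasy.
  rewrite feas feasy; lra.
Qed.
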